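(* For every integer $n\ge 1$, the functional $$F_n=\sum_{i=1}^{n}\sum_{j=1}^{n+1-i}e_{i,j}^*\in\mathfrak{gl}(n)^*$$ is regular on $\mathfrak{gl}(n)$; that is, $\dim\ker(B_{F_n})=n=\operatorname{ind}\mathfrak{gl}(n)$.
   Context: All Lie algebras are over $\mathbb{C}$. For $1\le i,j\le n$, $e_{i,j}$ is the matrix unit and $e_{i,j}^*$ the dual functional, $e_{i,j}^*(X)=X_{i,j}$. For a Lie algebra $\mathfrak{g}$ and $f\in\mathfrak{g}^*$, the Kirillov form is $B_f(x,y)=f([x,y])$ and $\ker(B_f)=\{x\in\mathfrak{g}: B_f(x,y)=0\ \forall y\in\mathfrak{g}\}$. The index is $\operatorname{ind}\mathfrak{g}=\min_{f\in\mathfrak{g}^*}\dim\ker(B_f)$; a functional $f$ is regular if $\dim\ker(B_f)=\operatorname{ind}\mathfrak{g}$. It is known that $\operatorname{ind}\mathfrak{gl}(n)=n$. *)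

(* Defs.v *)
From HB Require Import structures.
From mathcomp Require Import all_boot all_order all_algebra.
From mathcomp Require Import complex.
From mathcomp Require Import Rstruct.
Set Implicit Arguments. Unset Strict Implicit. Unset Printing Implicit Defensive.
Import Order.TTheory GRing.Theory Num.Theory.
Local Open Scope ring_scope.

Definition C : fieldType := (Rdefinitions.R)[i].

Definition gl (n : nat) := 'M[C]_n.
Definition lie_bracket (n : nat) (x y : 'M[C]_n) : 'M[C]_n := x *m y - y *m x.

Definition gl_dual (n : nat) := 'Hom('M[C]_n, C^o).

(* Kirillov form B_f(x,y) = f([x,y]), viewed as the linear map
   x |-> B_f(x, .) from gl(n) to gl(n)^*. Its kernel is ker(B_f). *)
Definition kirillov_map (n : nat) (f : gl_dual n) : 'Hom('M[C]_n, 'Hom('M[C]_n, C^o)) :=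
  linfun (fun x : 'M[C]_n => linfun (fun y : 'M[C]_n => f (lie_bracket x y) : C^o)).

Definition kirillov_ker (n : nat) (f : gl_dual n) : {vspace 'M[C]_n} :=
  lker (kirillov_map f).

(* regular: dim ker B_f equals the index, i.e. the minimum over all functionals. *)
Definition regular (n : nat) (f : gl_dual n) : Prop :=
  forall g : gl_dual n, (\dim (kirillov_ker f) <= \dim (kirillov_ker g))%N.

(* e_{i,j}^*(X) = X_{i,j}; indices are 0-based here. *)
(* F_n = sum_{i=1}^n sum_{j=1}^{n+1-i} e_{i,j}^*, i.e. (0-based) i + j <= n - 1. *)
Definition F (n : nat) : gl_dual n :=
  linfun (fun X : 'M[C]_n =>
    (\sum_(i < n) \sum_(j < n | (i + j <= n.-1)%N) X i j) : C^o).

(* Main.v *)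
Require Import Defs.
From HB Require Import structures.
From mathcomp Require Import all_boot all_order all_algebra.
From mathcomp Require Import complex Rstruct.
From mathcomp Require Import zify.
Set Implicit Arguments. Unset Strict Implicit. Unset Printing Implicit Defensive.
Import GRing.Theory.
Local Open Scope ring_scope.

Lemma lfunE_lin (aT rT : vectType C) (f : aT -> rT) :
  linear f -> forall x, linfun f x = f x.
Proof.
move=> fL x.
pose ff : {linear aT -> rT} := HB.pack f (GRing.isLinear.Build _ _ _ _ f fL).
exact: (lfunE ff x).
Qed.

Lemma dim_limg_le (aT rT : vectType C) (f : 'Hom(aT, rT)) (U : {vspace aT}) :
  (\dim (f @: U) <= \dim U)%N.
Proof. by rewrite -(limg_ker_dim f U) leq_addl. Qed.

Definition Phi n (T : 'M[C]_n) : 'End('M[C]_n) :=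
  linfun (fun X : 'M[C]_n => T *m X - X *m T).

Lemma PhiE n (T X : 'M[C]_n) : Phi T X = T *m X - X *m T.
Proof.
apply: lfunE_lin => a x y.
rewrite mulmxDr mulmxDl -scalemxAr -scalemxAl scalerBr.
by rewrite opprD addrACA.
Qed.


Lemma step k (a : 'M[C]_1) (c : 'M[C]_(k,1)) (T' : 'M[C]_k) :
  (\dim (Phi (block_mx a 0 c T') @: fullv) <= k + k + \dim (Phi T' @: fullv))%N.
Proof.
set T := block_mx a 0 c T'.
pose g1 : 'Hom('rV[C]_k, 'M[C]_(1 + k)) :=
  linfun (fun y : 'rV[C]_k => block_mx (- (y *m c)) (a *m y - y *m T') 0 (c *m y)).
pose g2 : 'Hom('cV[C]_k, 'M[C]_(1 + k)) :=
  linfun (fun z : 'cV[C]_k => block_mx 0 0 z 0).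
pose g3 : 'Hom('M[C]_k, 'M[C]_(1 + k)) :=
  linfun (fun W : 'M[C]_k => block_mx 0 0 0 W).
have g1E y : g1 y = block_mx (- (y *m c)) (a *m y - y *m T') 0 (c *m y).
  apply: lfunE_lin => r x z.
  rewrite scale_block_mx add_block_mx; congr block_mx.
  - by rewrite mulmxDl -scalemxAl scalerN opprD.
  - rewrite mulmxDr mulmxDl -scalemxAr -scalemxAl scalerBr.
    by rewrite opprD addrACA.
  - by rewrite scaler0 addr0.
  - by rewrite mulmxDr -scalemxAr.
have g2E z : g2 z = block_mx 0 0 z 0.
  apply: lfunE_lin => r x y.
  by rewrite scale_block_mx add_block_mx !scaler0 !addr0.
have g3E W : g3 W = block_mx 0 0 0 W.
  apply: lfunE_lin => r x y.
  by rewrite scale_block_mx add_block_mx !scaler0 !addr0.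
have claim X : Phi T X = g1 (ursubmx X) + g2 (dlsubmx (Phi T X))
                          + g3 (Phi T' (drsubmx X)).
  rewrite g1E g2E g3E !PhiE.
  rewrite -[X]submxK /T !mulmx_block !opp_block_mx !add_block_mx.
  rewrite !block_mxKur !block_mxKdl !block_mxKdr.
  set x00 := ulsubmx X.
  congr block_mx.
  - rewrite !mul0mx !addr0.
    have -> : a *m x00 = x00 *m a.
      by rewrite [a]mx11_scalar [x00]mx11_scalar -!scalar_mxM mulrC.
    by rewrite opprD addrA subrr add0r.
  - by rewrite !mul0mx !mulmx0 !addr0 add0r.
  - by rewrite add0r addr0.
  - by rewrite !mulmx0 !add0r addr0 addrA.
have sub : (Phi T @: fullv <= g1 @: fullv + g2 @: fullv + g3 @: (Phi T' @: fullv))%VS.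
  apply/subvP => Y /memv_imgP [Z _ ->].
  rewrite (claim Z); apply: memv_add; first apply: memv_add.
  - exact: memv_img (memvf _).
  - exact: memv_img (memvf _).
  - exact: memv_img (memv_img _ (memvf _)).
apply: leq_trans (dimvS sub) _.
apply: leq_trans (dimv_add_leqif _ _) _.
apply: leq_add; last exact: dim_limg_le.
apply: leq_trans (dimv_add_leqif _ _) _.
apply: leq_add.
  by apply: leq_trans (dim_limg_le _ _) _; rewrite dimvf /dim /= mul1n.
by apply: leq_trans (dim_limg_le _ _) _; rewrite dimvf /dim /= muln1.
Qed.


Lemma trig_bound m (T : 'M[C]_m) : is_trig_mx T ->
  (\dim (Phi T @: fullv) + m <= m * m)%N.
Proof.
elim: m T => [|k IH] T Ttrig.
  rewrite addn0; apply: leq_trans (dim_limg_le _ _) _; by rewrite dimvf /dim /=.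
pose T1 : 'M[C]_(1 + k) := T.
have Ttrig1 : is_trig_mx T1 := Ttrig.
have ur0 : ursubmx T1 = 0.
  by move: Ttrig1; rewrite -[X in is_trig_mx X]submxK is_trig_block_mx // => /and3P[/eqP ur0 _ _].
have ET : T1 = block_mx (ulsubmx T1) 0 (dlsubmx T1) (drsubmx T1).
  by rewrite -ur0 submxK.
have trig' : is_trig_mx (drsubmx T1).
  by move: Ttrig1; rewrite -[X in is_trig_mx X]submxK is_trig_block_mx // => /and3P[_ _].
have h2 := IH _ trig'.
change T with T1; rewrite ET.
apply: leq_trans (leq_add (step (ulsubmx T1) (dlsubmx T1) (drsubmx T1)) (leqnn _)) _.
move: h2; set d' := \dim _ => h2.
lia.
Qed.

Lemma ker_dim_eq m (T : 'M[C]_m) :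
  (\dim (lker (Phi T)) + \dim (Phi T @: fullv) = m * m)%N.
Proof. by have := limg_ker_dim (Phi T) fullv; rewrite capfv dimvf /dim /=. Qed.

Lemma cent_lower n (M : 'M[C]_n) : (n <= \dim (lker (Phi M)))%N.
Proof.
case: n M => [|n] M; first by [].
have [P Pu /= Ptrig] := Schur M (ltn0Sn n).
have Punit : P \in unitmx by apply: unitarymx_unit.
move: Ptrig; rewrite /similar_to /conjmx pinvmxE // => Ttrig.
set Q := invmx P in Ttrig *.
set T := P *m M *m Q in Ttrig *.
have QP : Q *m P = 1%:M by rewrite mulVmx.
have PQ : P *m Q = 1%:M by rewrite mulmxV.
have MT : M = Q *m T *m P by rewrite /T !mulmxA QP mul1mx -mulmxA QP mulmx1.
clearbody T.
pose kap : 'End('M[C]_n.+1) := linfun (fun X : 'M[C]_n.+1 => Q *m X *m P).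
have kapE X : kap X = Q *m X *m P.
  apply: lfunE_lin => r x y.
  by rewrite mulmxDr mulmxDl -scalemxAr -scalemxAl.
have kinj : (lker (Phi T) :&: lker kap)%VS = 0%VS.
  apply/eqP; rewrite -subv0; apply/subvP => X /memv_capP [_].
  rewrite memv_ker kapE => /eqP h.
  have : P *m (Q *m X *m P) *m Q = 0 by rewrite h mulmx0 mul0mx.
  by rewrite !mulmxA PQ mul1mx -mulmxA PQ mulmx1 => ->; rewrite memv0.
have sub : (kap @: lker (Phi T) <= lker (Phi M))%VS.
  apply/subvP => Y /memv_imgP [X]; rewrite memv_ker PhiE subr_eq0 => /eqP hX ->.
  rewrite memv_ker PhiE kapE subr_eq0 MT; apply/eqP.
  rewrite !mulmxA -[Q *m T *m P *m Q]mulmxA PQ mulmx1 -[Q *m T *m X]mulmxA hX.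
  by rewrite !mulmxA -[Q *m X *m P *m Q]mulmxA PQ mulmx1.
apply: leq_trans (dimvS sub); rewrite (limg_dim_eq kinj).
have := trig_bound Ttrig; have := ker_dim_eq T; lia.
Qed.


Lemma sum_sel n (r : 'I_n) (c : bool) (P : 'I_n -> bool) (f : 'I_n -> C) :
  (forall k, P k = (k == r) && c) ->
  \sum_(k < n) f k * (P k)%:R = (if c then f r else 0).
Proof.
move=> hP; rewrite (bigD1 r) //= big1 ?addr0.
  by rewrite hP eqxx /=; case: (c); rewrite ?mulr1 ?mulr0.
by move=> k /negbTE hk; rewrite hP hk /= mulr0.
Qed.

Lemma sum_sel0 n (P : 'I_n -> bool) (f : 'I_n -> C) :
  (forall k, P k = false) -> \sum_(k < n) f k * (P k)%:R = 0.
Proof. by move=> hP; rewrite big1 // => k _; rewrite hP mulr0. Qed.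

Lemma tr_delta n (Z : 'M[C]_n) i j : \tr (Z *m delta_mx j i) = Z i j.
Proof.
rewrite /mxtrace (bigD1 i) //= big1 ?addr0.
  rewrite mxE (eq_bigr (fun l => Z i l * ((l == j) && true)%:R)).
    by rewrite (@sum_sel _ j true).
  by move=> l _; rewrite mxE eqxx !andbT.
move=> k /negbTE hk; rewrite mxE big1 // => l _.
by rewrite mxE hk andbF mulr0.
Qed.

Definition Mg n (g : gl_dual n) : 'M[C]_n := \matrix_(i, j) g (delta_mx j i).

Lemma MgE n (g : gl_dual n) (X : 'M[C]_n) : g X = \tr (Mg g *m X).
Proof.
rewrite {1}[X]matrix_sum_delta linear_sum /mxtrace.
under eq_bigr => i _ do rewrite linear_sum.
under [RHS]eq_bigr => i _ do rewrite mxE.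
rewrite [RHS]exchange_big; apply: eq_bigr => i _.
apply: eq_bigr => j _.
by rewrite linearZ /= mxE mulrC.
Qed.

Lemma lie_linl n (y : 'M[C]_n) r x1 x2 :
  lie_bracket (r *: x1 + x2) y = r *: lie_bracket x1 y + lie_bracket x2 y.
Proof.
rewrite /lie_bracket mulmxDl mulmxDr -scalemxAl -scalemxAr scalerBr.
by rewrite opprD addrACA.
Qed.

Lemma lie_linr n (x : 'M[C]_n) r y1 y2 :
  lie_bracket x (r *: y1 + y2) = r *: lie_bracket x y1 + lie_bracket x y2.
Proof.
rewrite /lie_bracket mulmxDl mulmxDr -scalemxAl -scalemxAr scalerBr.
by rewrite opprD addrACA.
Qed.

Lemma inner_lin n (g : gl_dual n) (x : 'M[C]_n) :
  linear (fun y : 'M[C]_n => g (lie_bracket x y) : C^o).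
Proof. by move=> r y1 y2; rewrite lie_linr linearP. Qed.

Lemma kmapE n (g : gl_dual n) x y : kirillov_map g x y = g (lie_bracket x y).
Proof.
rewrite /kirillov_map lfunE_lin.
  by rewrite lfunE_lin //; apply: inner_lin.
move=> r x1 x2; apply/lfunP => z.
rewrite add_lfunE scale_lfunE !lfunE_lin; try apply: inner_lin.
by rewrite lie_linl linearP.
Qed.

Lemma kker_Phi n (g : gl_dual n) : kirillov_ker g = lker (Phi (Mg g)).
Proof.
apply/vspaceP => x; rewrite !memv_ker PhiE.
apply/eqP/eqP => [h | h].
  apply/matrixP => i j.
  have := congr1 (fun f : 'Hom(_, _) => f (delta_mx j i)) h.
  rewrite /= zero_lfunE kmapE MgE /lie_bracket mulmxBr !mulmxA.
  rewrite linearB /= [\tr (Mg g *m delta_mx j i *m x)]mxtrace_mulC mulmxA.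
  by rewrite -linearB /= -mulmxBl tr_delta => ->; rewrite mxE.
apply/lfunP => y; rewrite zero_lfunE kmapE MgE /lie_bracket mulmxBr !mulmxA.
rewrite linearB /= [\tr (Mg g *m y *m x)]mxtrace_mulC mulmxA -linearB /= -mulmxBl h.
by rewrite mul0mx linear0.
Qed.


Section Upper.
Variable m : nat.
Local Notation N := m.+1.

Definition Bm : 'M[C]_N :=
  \matrix_(i, j) (((i + j == m)%N)%:R - ((i + j == N)%N)%:R).

Lemma sumB (f : 'I_N -> C) (j : 'I_N) :
  \sum_(k < N) f k * Bm k j =
  f (inord (m - j)) - (if (0 < j)%N then f (inord (N - j)) else 0).
Proof.
under eq_bigr => k _ do rewrite mxE mulrBr.
rewrite sumrB.
rewrite (@sum_sel _ (inord (m - j)) true); last first.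
  move=> k; rewrite andbT -(inj_eq val_inj) /= inordK; last by lia.
  by apply/eqP/eqP; have := ltn_ord j; have := ltn_ord k; lia.
case: (posnP j) => [j0 | jpos].
  rewrite sum_sel0 ?subr0 // => k; apply/eqP; rewrite j0; have := ltn_ord k; lia.
rewrite (@sum_sel _ (inord (N - j)) true) //.
move=> k; rewrite andbT -(inj_eq val_inj) /= inordK; last by lia.
by apply/eqP/eqP; have := ltn_ord j; have := ltn_ord k; lia.
Qed.

Definition Am : 'M[C]_N := \matrix_(i, j) (((j + i <= m)%N)%:R).

Lemma AB : Am *m Bm = 1%:M.
Proof.
apply/matrixP => i j; rewrite !mxE.
rewrite (sumB (fun k => Am i k)) !mxE inordK; last by lia.
case: (posnP j) => [j0 | jpos].
  rewrite subr0; have -> : (m - j + i <= m)%N = (i == j) => //.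
  rewrite -(inj_eq val_inj) /=; apply/idP/eqP; have := ltn_ord i; lia.
rewrite inordK; last by have := ltn_ord j; lia.
have := ltn_ord j; have := ltn_ord i.
case: (ltngtP i j) => h1 h2 h3.
- have -> : (m - j + i <= m)%N by lia.
  have -> : (N - j + i <= m)%N by lia.
  have -> : (i == j) = false by apply/eqP => e; rewrite e ltnn in h1.
  by rewrite subrr.
- have -> : (m - j + i <= m)%N = false by lia.
  have -> : (N - j + i <= m)%N = false by lia.
  have -> : (i == j) = false by apply/eqP => e; rewrite e ltnn in h1.
  by rewrite subrr.
- have -> : (m - j + i <= m)%N by lia.
  have -> : (N - j + i <= m)%N = false by lia.
  have -> : (i == j) = true by apply/eqP/val_inj.
  by rewrite subr0.
Qed.

Lemma Bsym (i k : 'I_N) : Bm i k = Bm k i.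
Proof. by rewrite !mxE addnC. Qed.

Lemma Eq_entry (X : 'M[C]_N) : Bm *m X = X *m Bm -> forall i j : 'I_N,
  X i (inord (m - j)) - (if (0 < j)%N then X i (inord (N - j)) else 0) =
  X (inord (m - i)) j - (if (0 < i)%N then X (inord (N - i)) j else 0).
Proof.
move=> hX i j.
have := congr1 (fun M : 'M[C]_N => M i j) hX; rewrite /= !mxE => h.
rewrite -(sumB (fun k => X i k)) -(sumB (fun k => X k j)).
rewrite -h; apply: eq_bigr => k _; by rewrite Bsym mulrC.
Qed.

Lemma inj0 (X : 'M[C]_N) : Bm *m X = X *m Bm ->
  (forall i, X i (inord 0) = 0) -> X = 0.
Proof.
move=> hX h0.
have E := Eq_entry hX.
have Q : forall k, (k <= m)%N ->
  forall i, X i (inord k) = 0 /\ X i (inord (m - k)) = 0.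
  elim=> [_ | k IH lek] i.
    split; first exact: h0.
    have := E i (inord 0); rewrite inordK // subn0 /= => h.
    apply: etrans (esym (subr0 _)) _; rewrite h !h0.
    by case: (0 < i)%N; rewrite ?subr0.
  have [IH1 IH2] : (forall i, X i (inord k) = 0) /\ (forall i, X i (inord (m - k)) = 0).
    by split => i'; have [] := IH (ltnW lek) i'.
  have c1 : forall i, X i (inord k.+1) = 0.
    move=> i'; have := E i' (inord (m - k)); rewrite inordK; last by lia.
    have -> : (m - (m - k) = k)%N by lia.
    have -> : (N - (m - k) = k.+1)%N by lia.
    have -> : (0 < m - k)%N by lia.
    rewrite IH1 IH2 => h; apply: oppr_inj; rewrite -[LHS]add0r h.
    by case: (0 < i')%N; rewrite ?IH2 subr0 oppr0.
  split; first exact: c1.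
  have := E i (inord k.+1); rewrite inordK; last by lia.
  have -> : (N - k.+1 = m - k)%N by lia.
  rewrite /= IH2 c1 subr0; case: (0 < i)%N; by rewrite ?c1 ?subr0.
apply/matrixP => i j; rewrite mxE.
have [] := Q j (ltn_ord j : (j < N)%N) i.
by rewrite inord_val.
Qed.
End Upper.


Lemma FE n (X : 'M[C]_n) :
  F n X = \sum_(i < n) \sum_(j < n | (i + j <= n.-1)%N) X i j.
Proof.
apply: lfunE_lin => r x y.
rewrite /GRing.scale /= mulr_sumr -big_split; apply: eq_bigr => a _.
rewrite mulr_sumr -big_split; apply: eq_bigr => b _.
by rewrite !mxE.
Qed.

Lemma MgF m : Mg (F m.+1) = Am m.
Proof.
apply/matrixP => i j; rewrite !mxE FE /=.
under eq_bigr => a _ do rewrite big_mkcond /=.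
rewrite (bigD1 j) //= [X in _ + X]big1 ?addr0; last first.
  move=> a /negbTE ha; apply: big1 => b _; rewrite mxE ha /=; by case: ifP.
rewrite (bigD1 i) //= [X in _ + X]big1 ?addr0; last first.
  move=> b /negbTE hb; rewrite mxE hb andbF; by case: ifP.
by rewrite mxE !eqxx; case: ifP.
Qed.



Lemma cent_sub n (A B : 'M[C]_n) : A *m B = 1%:M ->
  (lker (Phi A) <= lker (Phi B))%VS.
Proof.
move=> hAB; have BA : B *m A = 1%:M by apply: mulmx1C.
apply/subvP => X hX0; rewrite memv_ker PhiE subr_eq0; apply/eqP.
have /eqP hX : A *m X - X *m A == 0 by rewrite -PhiE -memv_ker.
move/eqP: hX; rewrite subr_eq0 => /eqP hX.
rewrite -[X in X *m B]mul1mx -BA -[B *m X]mulmx1 -hAB.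
by rewrite !mulmxA -[B *m X *m A]mulmxA -hX !mulmxA.
Qed.

Lemma dim_le_inj n (B : 'M[C]_n.+1) :
  (forall X, B *m X = X *m B -> (forall i, X i (inord 0) = 0) -> X = 0) ->
  (\dim (lker (Phi B)) <= n.+1)%N.
Proof.
move=> hinj.
pose cm : 'Hom('M[C]_n.+1, 'cV[C]_n.+1) :=
  linfun (fun X : 'M[C]_n.+1 => col (inord 0) X).
have cmE X : cm X = col (inord 0) X.
  by apply: lfunE_lin => r x y; apply/matrixP => i k; rewrite !mxE.
have kinj : (lker (Phi B) :&: lker cm)%VS = 0%VS.
  apply/eqP; rewrite -subv0; apply/subvP => X /memv_capP [h1 h2].
  have /eqP hX : B *m X - X *m B == 0 by rewrite -PhiE -memv_ker.
  have /eqP hc : col (inord 0) X == 0 by rewrite -cmE -memv_ker.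
  move/eqP: hX; rewrite subr_eq0 => /eqP hX.
  rewrite (hinj X hX) ?memv0 // => i.
  by have := congr1 (fun v : 'cV[C]_n.+1 => v i 0) hc; rewrite !mxE.
rewrite -(limg_dim_eq kinj).
apply: leq_trans (dimvS (subvf (cm @: lker (Phi B)))) _.
by rewrite dimvf /dim /= muln1.
Qed.


Theorem theorem3p16 (n : nat) (hn : (1 <= n)%N) :
  regular (F n) /\ \dim (kirillov_ker (F n)) = n.
Proof.
case: n hn => [//|m] _.
have hdim : \dim (kirillov_ker (F m.+1)) = m.+1.
  rewrite kker_Phi MgF; apply/eqP; rewrite eqn_leq cent_lower andbT.
  apply: leq_trans (dimvS (cent_sub (AB m))) _.
  exact: dim_le_inj (@inj0 m).
split=> //.
by move=> g; rewrite hdim kker_Phi; apply: cent_lower.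
Qed.
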